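(* Let $\omega\in\mathbb T^1\setminus\mathbb Q$, $f\in\mathcal V_\omega$, and let $\phi^+$ be a representative of the SNA of $f$. Let $\theta,\theta'\in\mathbb T^1$ with $d(\theta,\theta')<|E|/(4S)$ (where $|E|$ is the length of $E$), and suppose $\phi^+(\vartheta+\omega)=f_\vartheta(\phi^+(\vartheta))$ holds for every $\vartheta\in\{\theta+m\omega,\theta'+m\omega: m\in\mathbb Z\}$. For $n\in\mathbb N_0$ and $\eta,\eta'\in\mathbb T^1$ let $\wp^n(\eta,\eta')=\#\{m\in\mathbb Z: -1\le m<n-1,\ \phi^+(\eta+m\omega)\in C,\ \phi^+(\eta'+m\omega)\in C,\ \eta+m\omega\notin\mathcal I_0,\ \eta'+m\omega\notin\mathcal I_0\}$. Then for all $n\in\mathbb N$, $$d\big(\phi^+(\theta+n\omega),\phi^+(\theta'+n\omega)\big)\le\alpha^{2n-3\wp^n(\theta,\theta')}\,d\big(\phi^+(\theta),\phi^+(\theta')\big)+S\,d(\theta,\theta')\sum_{k=1}^n\alpha^{2(n-k)-3\wp^{n-k}(\theta+k\omega,\theta'+k\omega)}.$$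
   Context: Notation: $\mathbb T^1=\mathbb R/\mathbb Z$, $d$ the usual distance on $\mathbb T^1$, $\pi_1,\pi_2$ the coordinate projections of $\mathbb T^2=\mathbb T^1\times\mathbb T^1$, $\mathrm{Leb}$ Lebesgue measure on $\mathbb T^1$. Skew products: for irrational $\omega$, $\mathcal F_\omega$ is the set of $C^1$-diffeomorphisms $f$ of $\mathbb T^2$ homotopic to the identity of the form $f(\theta,x)=(\theta+\omega,f_\theta(x))$. Write $f^k_\theta(x)=\pi_2(f^k(\theta,x))$ for $k\in\mathbb Z$. Invariant graphs: a measurable $\phi:\mathbb T^1\to\mathbb T^1$ is an invariant graph if $f_\theta(\phi(\theta))=\phi(\theta+\omega)$ for Lebesgue-a.e. $\theta$; graphs agreeing a.e. are identified. Its Lyapunov exponent is $\lambda(\phi)=\int_{\mathbb T^1}\log|\partial_xf_\theta(\phi(\theta))|\,d\theta$. It is an SNA (resp. SNR) if $\lambda(\phi)<0$ (resp. $>0$) and there is no continuous function a.e. equal to $\phi$. The associated measure is $\mu_\phi(A)=\mathrm{Leb}(\pi_1(A\cap\Phi))$, $\Phi=\{(\theta,\phi(\theta))\}$. The class $\mathcal V_\omega$: $f\in\mathcal F_\omega$ belongs to $\mathcal V_\omega$ if the following hold for some choice of data. (i) There are disjoint closed intervals $C=[c^-,c^+]$, $E=[e^-,e^+]\subseteq\mathbb T^1$ and a set $\mathcal I_0\subseteq\mathbb T^1$ which is a union of $\mathcal N$ disjoint open intervals, and constants $\alpha>4$, $S>0$, such that: $f_\theta(x)\in\mathrm{int}(C)$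 whenever $x\notin(e^-,e^+)$ and $\theta\notin\mathcal I_0$; for all $\theta,\theta',x,x'$: $\alpha^{-2}d(x,x')\le d(f_\theta(x),f_\theta(x'))\le\alpha^2d(x,x')$ and $d(f_\theta(x),f_{\theta'}(x))\le S\,d(\theta,\theta')$; $|\partial_xf_\theta(x)|\le\alpha^{-1}$ for $x\in C$; $|\partial_xf_\theta(x)|\ge\alpha$ for $x\in E$. (ii) Integers $\kappa\ge2$, $K_0\ge1$, $K_n=K_0\kappa^n$, $b_0=1$, $b_n=(1-1/K_{n-1})b_{n-1}$, with $b=\lim_n b_n>\sqrt{5/6}$. A super-exponentially increasing integer sequence $(M_n)_{n\ge0}$ with $M_0\ge2$ and $M_{n+1}\le2\alpha^{M_n/16}$. A non-increasing positive sequence $(\varepsilon_n)$ with $\varepsilon_0\le1$ and $\varepsilon_{n+1}\le2\alpha^{-M_n/4}/s$ for a fixed $s>0$. Moreover $\alpha\ge\alpha_*$ and $\varepsilon_0\le\varepsilon_*$, where $\alpha_*>1,\varepsilon_*>0$ are thresholds guaranteeing $\sum_{n\ge0}(2K_nM_n+1)\mathcal N\varepsilon_n\le\sum_{n\ge0}\varepsilon_n^{1/2}<1/16$; and each component of $\mathcal I_0$ has length $<\varepsilon_0$. (iii) Critical regions: recursively $\mathcal A_n=(\mathcal I_n-(M_n-1)\omega)\times C$, $\mathcal B_n=(\mathcal I_n+(M_n+1)\omega)\times E$, $\mathcal I_{n+1}=\mathrm{int}\,\pi_1\big(f^{M_n-1}(\mathcal A_n)\cap f^{-(M_n+1)}(\mathcal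 B_n)\big)$. Let $\mathcal W_n^+=\bigcup_{j=0}^n\bigcup_{l=1}^{M_j+1}(\mathcal I_j+l\omega)$, $\mathcal W_n^-=\bigcup_{j=0}^n\bigcup_{l=-(M_j-1)}^{0}(\mathcal I_j+l\omega)$, $\mathcal W_{-1}^\pm=\emptyset$. For every $n\in\mathbb N$: $\mathcal I_j\ne\emptyset$ for $j\le n$; $\mathcal I_j\cap\bigcup_{k=1}^{2K_jM_j}(\mathcal I_j+k\omega)=\emptyset$ for $j=0,\dots,n$; $\big((\mathcal I_j-(M_j-1)\omega)\cup(\mathcal I_j+(M_j+1)\omega)\big)\cap(\mathcal W_{j-1}^+\cup\mathcal W_{j-1}^-)=\emptyset$ for $j=1,\dots,n$; and $\mathcal I_n$ has exactly $\mathcal N$ connected components, each of length $<\varepsilon_n$. (iv) $f$ has an SNA $\phi^+$ and an SNR $\phi^-$, and $\mu_{\phi^+},\mu_{\phi^-}$ are the only $f$-invariant ergodic probability measures. (v) $f$ is minimal. *)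

(* Defs.v *)
From Stdlib Require Import Reals Lra Lia ZArith Classical ClassicalEpsilon.
Open Scope R_scope.

(* The circle T^1 = R/Z, represented by real numbers (lifts).          *)

Definition eqT (x y : R) : Prop := exists k : Z, x - y = IZR k.

Definition dT (x y : R) : R := Rmin (frac_part (x - y)) (1 - frac_part (x - y)).

Definition irrational (w : R) : Prop :=
  forall p q : Z, q <> 0%Z -> w * IZR q <> IZR p.

(** closed arc [a, a+len] of T^1 (0 <= len < 1) *)
Definition inClosedArc (a len x : R) : Prop := frac_part (x - a) <= len.
Definition inOpenArc (a len x : R) : Prop :=
  0 < frac_part (x - a) /\ frac_part (x - a) < len.

Definition N_components_shorter (I : R -> Prop) (N : nat) (eps : R) : Prop :=
  exists (a l : nat -> R),
    (forall i, (i < N)%nat -> 0 < l i /\ l i < eps /\ l i <= 1) /\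
    (forall i j x, (i < N)%nat -> (j < N)%nat -> i <> j ->
        ~ (inOpenArc (a i) (l i) x /\ inOpenArc (a j) (l j) x)) /\
    (forall x, I x <-> exists i, (i < N)%nat /\ inOpenArc (a i) (l i) x).

Definition interior (P : R -> Prop) : R -> Prop :=
  fun t => exists d, 0 < d /\ forall u, Rabs (u - t) < d -> P u.

(* Skew products. A map f(theta,x) = (theta+omega, f_theta(x)) of T^2   *)
(* homotopic to the identity is given by a lift F with                  *)
(* F (theta+1) x = F theta x and F theta (x+1) = F theta x + 1;         *)
(* G is the fibre inverse, so f^{-1}(theta,y) = (theta-omega, G (theta-omega) y). *)

Definition cont2 (g : R -> R -> R) : Prop :=
  forall t x eps, 0 < eps -> exists d, 0 < d /\
    forall t' x', Rabs (t' - t) < d -> Rabs (x' - x) < d ->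
      Rabs (g t' x' - g t x) < eps.

Definition C1_2 (F : R -> R -> R) : Prop :=
  exists Fx Ft : R -> R -> R,
    (forall t x, derivable_pt_lim (fun y => F t y) x (Fx t x)) /\
    (forall t x, derivable_pt_lim (fun s => F s x) t (Ft t x)) /\
    cont2 Fx /\ cont2 Ft.

Definition skew_diffeo (F G : R -> R -> R) : Prop :=
  (forall t x, F (t + 1) x = F t x) /\
  (forall t x, F t (x + 1) = F t x + 1) /\
  C1_2 F /\ C1_2 G /\
  (forall t x, G t (F t x) = x) /\
  (forall t y, F t (G t y) = y).

Section Iterates.
Variables (w : R) (F G : R -> R -> R).

Fixpoint fwd (k : nat) (p : R * R) : R * R :=
  match k with
  | O => p
  | S k' => fwd k' (fst p + w, F (fst p) (snd p))
  end.

Fixpoint bwd (k : nat) (p : R * R) : R * R :=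
  match k with
  | O => p
  | S k' => bwd k' (fst p - w, G (fst p - w) (snd p))
  end.

Definition fZ (k : Z) (p : R * R) : R * R :=
  match k with
  | Z0 => p
  | Zpos q => fwd (Pos.to_nat q) p
  | Zneg q => bwd (Pos.to_nat q) p
  end.

Definition img (k : Z) (A : R * R -> Prop) : R * R -> Prop :=
  fun q => A (fZ (- k) q).

End Iterates.

Definition proj1T (A : R * R -> Prop) : R -> Prop := fun t => exists x, A (t, x).

Definition covers (A : R -> Prop) (a b : nat -> R) : Prop :=
  (forall k, a k <= b k) /\
  (forall t, 0 <= t < 1 -> A t -> exists k, a k < t < b k).

Definition cover_sums (A : R -> Prop) (s : R) : Prop :=
  exists a b, covers A a b /\ infinite_sum (fun k => b k - a k) s.

Definition is_glbR (E : R -> Prop) (r : R) : Prop :=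
  (forall s, E s -> r <= s) /\ (forall r', (forall s, E s -> r' <= s) -> r' <= r).

Definition leb (A : R -> Prop) (r : R) : Prop := is_glbR (cover_sums A) r.

Definition nullset (A : R -> Prop) : Prop := leb A 0.
Definition ae (P : R -> Prop) : Prop := nullset (fun t => ~ P t).

Definition leb_measurable (A : R -> Prop) : Prop :=
  forall B r1 r2 r3, leb B r1 -> leb (fun t => B t /\ A t) r2 ->
    leb (fun t => B t /\ ~ A t) r3 -> r1 = r2 + r3.

Definition measurableT (phi : R -> R) : Prop :=
  forall a len, 0 < len <= 1 ->
    leb_measurable (fun t => inOpenArc a len (phi t)).

(** Integral over T^1 of a bounded measurable function g, via the layer-cake
    formula: int g = -M + int_{-M}^{M} Leb{g > t} dt  when |g| <= M. *)
Definition integralT (g : R -> R) (v : R) : Prop :=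
  exists (M : R) (h : R -> R) (pr : Riemann_integrable h (- M) M),
    0 <= M /\ (forall t, Rabs (g t) <= M) /\
    (forall t, leb (fun u => g u > t) (h t)) /\
    v = - M + RiemannInt pr.

Definition invariant_graph (w : R) (F : R -> R -> R) (phi : R -> R) : Prop :=
  (forall t, eqT (phi (t + 1)) (phi t)) /\
  measurableT phi /\
  ae (fun t => eqT (F t (phi t)) (phi (t + w))).

Definition lyapunov (F : R -> R -> R) (phi : R -> R) (v : R) : Prop :=
  exists Fx : R -> R -> R,
    (forall t x, derivable_pt_lim (fun y => F t y) x (Fx t x)) /\
    integralT (fun t => ln (Rabs (Fx t (phi t)))) v.

Definition ae_continuous (phi : R -> R) : Prop :=
  exists psi : R -> R, continuity psi /\ (forall t, eqT (psi (t + 1)) (psi t)) /\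
    ae (fun t => eqT (phi t) (psi t)).

Definition SNA (w : R) (F : R -> R -> R) (phi : R -> R) : Prop :=
  invariant_graph w F phi /\ (exists v, lyapunov F phi v /\ v < 0) /\
  ~ ae_continuous phi.

Definition SNR (w : R) (F : R -> R -> R) (phi : R -> R) : Prop :=
  invariant_graph w F phi /\ (exists v, lyapunov F phi v /\ 0 < v) /\
  ~ ae_continuous phi.

Definition periodic2 (A : R * R -> Prop) : Prop :=
  forall t x, (A (t, x) <-> A (t + 1, x)) /\ (A (t, x) <-> A (t, x + 1)).

Definition open2 (A : R * R -> Prop) : Prop :=
  periodic2 A /\
  forall p, A p -> exists d, 0 < d /\ forall q,
    Rabs (fst q - fst p) < d -> Rabs (snd q - snd p) < d -> A q.

Definition sigma_algebra (Sg : (R * R -> Prop) -> Prop) : Prop :=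
  Sg (fun _ => True) /\
  (forall A, Sg A -> Sg (fun p => ~ A p)) /\
  (forall An : nat -> R * R -> Prop, (forall n, Sg (An n)) ->
      Sg (fun p => exists n, An n p)).

Definition borel2 (A : R * R -> Prop) : Prop :=
  periodic2 A /\
  forall Sg, sigma_algebra Sg -> (forall U, open2 U -> Sg U) -> Sg A.

Definition prob_measure (mu : (R * R -> Prop) -> R) : Prop :=
  (forall A B, (forall p, A p <-> B p) -> mu A = mu B) /\
  (forall A, borel2 A -> 0 <= mu A) /\
  mu (fun _ => True) = 1 /\
  (forall An : nat -> R * R -> Prop,
     (forall n, borel2 (An n)) ->
     (forall n m p, n <> m -> ~ (An n p /\ An m p)) ->
     infinite_sum (fun n => mu (An n)) (mu (fun p => exists n, An n p))).

Definition f_invariant (w : R) (F G : R -> R -> R) (mu : (R * R -> Prop) -> R) : Prop :=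
  forall A, borel2 A -> mu (fun p => A (fZ w F G 1 p)) = mu A.

Definition f_ergodic (w : R) (F G : R -> R -> R) (mu : (R * R -> Prop) -> R) : Prop :=
  forall A, borel2 A -> (forall p, A (fZ w F G 1 p) <-> A p) ->
    mu A = 0 \/ mu A = 1.

Definition is_graph_measure (phi : R -> R) (mu : (R * R -> Prop) -> R) : Prop :=
  forall A, borel2 A -> leb (fun t => A (t, phi t)) (mu A).

Definition minimal (w : R) (F G : R -> R -> R) : Prop :=
  forall p q d, 0 < d -> exists k : Z,
    dT (fst (fZ w F G k p)) (fst q) < d /\ dT (snd (fZ w F G k p)) (snd q) < d.

(* Data: C = [cL, cL+lenC], E = [eL, eL+lenE], I_0 = union of the N    *)
(* open arcs (a0 i, a0 i + l0 i), alpha, S, kappa, K0, (M n), (eps n), *)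
(* s, and the invariant graphs phip (SNA), phim (SNR).                 *)

Definition I0set (N : nat) (a0 l0 : nat -> R) : R -> Prop :=
  fun t => exists i, (i < N)%nat /\ inOpenArc (a0 i) (l0 i) t.

Section Critical.
Variables (w : R) (F G : R -> R -> R) (cL lenC eL lenE : R)
          (I0 : R -> Prop) (M : nat -> nat).

Definition inC (x : R) : Prop := inClosedArc cL lenC x.
Definition inE (x : R) : Prop := inClosedArc eL lenE x.

Fixpoint Iseq (n : nat) : R -> Prop :=
  match n with
  | O => I0
  | S k =>
    let Ak := fun q : R * R =>
      Iseq k (fst q + (INR (M k) - 1) * w) /\ inC (snd q) in
    let Bk := fun q : R * R =>
      Iseq k (fst q - (INR (M k) + 1) * w) /\ inE (snd q) in
    interior (proj1T (fun q =>
      img w F G (Z.of_nat (M k) - 1) Ak q /\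
      img w F G (- (Z.of_nat (M k) + 1)) Bk q))
  end.

Definition Wplus (n : nat) : R -> Prop :=
  fun t => exists j l, (j <= n)%nat /\ (1 <= l <= M j + 1)%nat /\
    Iseq j (t - INR l * w).
Definition Wminus (n : nat) : R -> Prop :=
  fun t => exists j l, (j <= n)%nat /\ (l <= M j - 1)%nat /\
    Iseq j (t + INR l * w).

End Critical.

Definition Kseq (K0 kappa : nat) (n : nat) : nat := (K0 * kappa ^ n)%nat.

Fixpoint bseq (K0 kappa : nat) (n : nat) : R :=
  match n with
  | O => 1
  | S k => (1 - / INR (Kseq K0 kappa k)) * bseq K0 kappa k
  end.

Definition super_exp_increasing (M : nat -> nat) : Prop :=
  (forall n, (M n < M (S n))%nat) /\
  (forall c, 0 < c -> exists n0, forall n, (n0 <= n)%nat -> c ^ n <= INR (M n)).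

Definition in_V (w : R) (F G : R -> R -> R)
    (cL lenC eL lenE : R) (N : nat) (a0 l0 : nat -> R) (alpha Slip : R)
    (kappa K0 : nat) (M : nat -> nat) (eps : nat -> R) (s : R)
    (phip phim : R -> R) : Prop :=
  let I0 := I0set N a0 l0 in
  let C := inC cL lenC in
  let E := inE eL lenE in
  irrational w /\ skew_diffeo F G /\
  (0 <= lenC < 1 /\ 0 <= lenE < 1 /\ (forall x, ~ (C x /\ E x))) /\
  (forall i, (i < N)%nat -> 0 < l0 i <= 1) /\
  (forall i j x, (i < N)%nat -> (j < N)%nat -> i <> j ->
      ~ (inOpenArc (a0 i) (l0 i) x /\ inOpenArc (a0 j) (l0 j) x)) /\
  4 < alpha /\ 0 < Slip /\
  (forall t x, ~ inOpenArc eL lenE x -> ~ I0 t -> inOpenArc cL lenC (F t x)) /\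
  (forall t x x', / (alpha ^ 2) * dT x x' <= dT (F t x) (F t x') /\
                  dT (F t x) (F t x') <= alpha ^ 2 * dT x x') /\
  (forall t t' x, dT (F t x) (F t' x) <= Slip * dT t t') /\
  (forall t x l, C x -> derivable_pt_lim (fun y => F t y) x l -> Rabs l <= / alpha) /\
  (forall t x l, E x -> derivable_pt_lim (fun y => F t y) x l -> alpha <= Rabs l) /\
  (2 <= kappa)%nat /\ (1 <= K0)%nat /\
  (exists b, Un_cv (bseq K0 kappa) b /\ sqrt (5 / 6) < b) /\
  super_exp_increasing M /\ (2 <= M 0%nat)%nat /\
  (forall n, INR (M (S n)) <= 2 * Rpower alpha (INR (M n) / 16)) /\
  (forall n, 0 < eps n) /\ (forall n, eps (S n) <= eps n) /\ eps 0%nat <= 1 /\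
  0 < s /\
  (forall n, eps (S n) <= 2 * Rpower alpha (- (INR (M n) / 4)) / s) /\
  (exists L1 L2,
     infinite_sum (fun n => (2 * INR (Kseq K0 kappa n) * INR (M n) + 1)
                             * INR N * eps n) L1 /\
     infinite_sum (fun n => sqrt (eps n)) L2 /\ L1 <= L2 /\ L2 < 1 / 16) /\
  (forall i, (i < N)%nat -> l0 i < eps 0%nat) /\
  (let I := Iseq w F G cL lenC eL lenE I0 M in
   (forall j, exists t, I j t) /\
   (forall j t k, (1 <= k <= 2 * Kseq K0 kappa j * M j)%nat ->
       ~ (I j t /\ I j (t - INR k * w))) /\
   (forall j t, (1 <= j)%nat ->
       ~ ((I j (t + (INR (M j) - 1) * w) \/ I j (t - (INR (M j) + 1) * w)) /\
          (Wplus w F G cL lenC eL lenE I0 M (j - 1) t \/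
           Wminus w F G cL lenC eL lenE I0 M (j - 1) t))) /\
   (forall n, N_components_shorter (I n) N (eps n))) /\
  SNA w F phip /\ SNR w F phim /\
  (forall mu, prob_measure mu -> f_invariant w F G mu -> f_ergodic w F G mu ->
     is_graph_measure phip mu \/ is_graph_measure phim mu) /\
  minimal w F G.

Definition indic (P : Prop) : nat :=
  if excluded_middle_informative P then 1%nat else 0%nat.

(** number of m in Z with -1 <= m < n-1 (i.e. m = j - 1, j = 0..n-1) such that
    phi(eta+m w), phi(eta'+m w) in C and eta+m w, eta'+m w notin I_0 *)
Fixpoint wp (w : R) (C I0 : R -> Prop) (phi : R -> R) (n : nat) (eta eta' : R) : nat :=
  match n with
  | O => O
  | S j =>
    let m := INR j - 1 in
    Nat.add (wp w C I0 phi j eta eta')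
     (indic (C (phi (eta + m * w)) /\ C (phi (eta' + m * w)) /\
            ~ I0 (eta + m * w) /\ ~ I0 (eta' + m * w)))
  end.

(* Main.v *)
Require Import Defs.
From Stdlib Require Import Reals ZArith Lra Lia Psatz ClassicalEpsilon.
Open Scope R_scope.

Lemma frac_char (z f : R) (k : Z) : z = IZR k + f -> 0 <= f < 1 ->
  Int_part z = k /\ frac_part z = f.
Proof.
  intros Hz Hf. assert (Hu : (k + 1)%Z = up z).
  { apply tech_up; rewrite plus_IZR; lra. }
  unfold Int_part. split. rewrite <- Hu; lia.
  unfold frac_part, Int_part. rewrite <- Hu.
  replace (k + 1 - 1)%Z with k by lia. lra.
Qed.

Lemma frac_bounds (z : R) : 0 <= frac_part z < 1 /\ z = IZR (Int_part z) + frac_part z.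
Proof.
  destruct (base_fp z) as [H1 H2]. split. lra. unfold frac_part; ring.
Qed.

Lemma dT_attained (x y : R) : exists k : Z, dT x y = Rabs (x - y - IZR k).
Proof.
  destruct (frac_bounds (x - y)) as [Hf He]. unfold dT.
  set (f := frac_part (x - y)) in *. set (I := Int_part (x - y)) in *.
  destruct (Rle_dec f (1 - f)).
  - exists I. rewrite Rmin_left by lra. rewrite Rabs_right; lra.
  - exists (I + 1)%Z. rewrite Rmin_right by lra. rewrite plus_IZR.
    rewrite Rabs_left; lra.
Qed.

Lemma dT_le (x y : R) (k : Z) : dT x y <= Rabs (x - y - IZR k).
Proof.
  destruct (frac_bounds (x - y)) as [Hf He]. unfold dT.
  set (f := frac_part (x - y)) in *. set (I := Int_part (x - y)) in *.
  destruct (Z.lt_total (I - k) 0) as [Hlt|[Heq|Hgt]].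
  - assert (IZR (I - k) <= -1) by (apply IZR_le; lia).
    rewrite minus_IZR in H. apply Rle_trans with (1 - f). apply Rmin_r.
    rewrite Rabs_left1; lra.
  - assert (IZR (I - k) = 0) by (rewrite Heq; reflexivity).
    rewrite minus_IZR in H. apply Rle_trans with f. apply Rmin_l.
    rewrite Rabs_right; lra.
  - assert (IZR (I - k) >= 1) by (apply Rle_ge, IZR_le; lia).
    rewrite minus_IZR in H. apply Rle_trans with f. apply Rmin_l.
    rewrite Rabs_right; lra.
Qed.

Lemma dT_nonneg x y : 0 <= dT x y.
Proof. destruct (dT_attained x y) as [k ->]. apply Rabs_pos. Qed.

Lemma dT_triangle x y z : dT x z <= dT x y + dT y z.
Proof.
  destruct (dT_attained x y) as [k1 H1]. destruct (dT_attained y z) as [k2 H2].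
  rewrite H1, H2. apply Rle_trans with (Rabs (x - z - IZR (k1 + k2))).
  apply dT_le. rewrite plus_IZR.
  replace (x - z - (IZR k1 + IZR k2)) with ((x - y - IZR k1) + (y - z - IZR k2)) by ring.
  apply Rabs_triang.
Qed.

Lemma dT_sym x y : dT x y = dT y x.
Proof.
  apply Rle_antisym.
  - destruct (dT_attained y x) as [k H]. rewrite H.
    apply Rle_trans with (Rabs (x - y - IZR (- k))). apply dT_le.
    rewrite opp_IZR, <- Rabs_Ropp. right; f_equal; ring.
  - destruct (dT_attained x y) as [k H]. rewrite H.
    apply Rle_trans with (Rabs (y - x - IZR (- k))). apply dT_le.
    rewrite opp_IZR, <- Rabs_Ropp. right; f_equal; ring.
Qed.

Lemma eqT_dT x y : eqT x y -> dT x y = 0.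
Proof.
  intros [k Hk]. apply Rle_antisym. 2: apply dT_nonneg.
  apply Rle_trans with (Rabs (x - y - IZR k)). apply dT_le.
  rewrite Hk. replace (IZR k - IZR k) with 0 by ring. rewrite Rabs_R0; lra.
Qed.

Lemma dT_eqT_l x x' y : eqT x x' -> dT x y = dT x' y.
Proof.
  intros Hx. apply Rle_antisym.
  - apply Rle_trans with (dT x x' + dT x' y). apply dT_triangle.
    rewrite eqT_dT; auto; lra.
  - apply Rle_trans with (dT x' x + dT x y). apply dT_triangle.
    rewrite (dT_sym x' x), eqT_dT; auto; lra.
Qed.

Lemma dT_eqT x x' y y' : eqT x x' -> eqT y y' -> dT x y = dT x' y'.
Proof.
  intros Hx Hy. rewrite (dT_eqT_l x x' y Hx). rewrite (dT_sym x' y), (dT_sym x' y').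
  apply dT_eqT_l; auto.
Qed.

Lemma dT_abs x y : dT x y <= Rabs (x - y).
Proof. apply Rle_trans with (Rabs (x - y - IZR 0)). apply dT_le. right; f_equal; simpl; ring. Qed.

Lemma dT_half x y k : Rabs (x - y - IZR k) <= 1/2 -> dT x y = Rabs (x - y - IZR k).
Proof.
  intros H. destruct (dT_attained x y) as [j Hj]. apply Rle_antisym. apply dT_le.
  rewrite Hj. destruct (Z.eq_dec j k) as [->|Hne]. lra.
  assert (Habs : 1 <= Rabs (IZR (k - j))).
  { destruct (Z.lt_total (k - j) 0) as [Hl|[He|Hg]].
    - assert (IZR (k-j) <= -1) by (apply IZR_le; lia). rewrite Rabs_left1; lra.
    - lia.
    - assert (IZR (k-j) >= 1) by (apply Rle_ge, IZR_le; lia). rewrite Rabs_right; lra. }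
  rewrite minus_IZR in Habs.
  replace (IZR k - IZR j) with ((x - y - IZR j) - (x - y - IZR k)) in Habs by ring.
  pose proof (Rabs_triang (x - y - IZR j) (- (x - y - IZR k))).
  rewrite Rabs_Ropp in H0. unfold Rminus at 1 in Habs. lra.
Qed.

Lemma eqT_refl x : eqT x x.
Proof. exists 0%Z. simpl; ring. Qed.
Lemma eqT_sym x y : eqT x y -> eqT y x.
Proof. intros [k H]. exists (- k)%Z. rewrite opp_IZR; lra. Qed.
Lemma eqT_trans x y z : eqT x y -> eqT y z -> eqT x z.
Proof. intros [k H] [j H']. exists (k + j)%Z. rewrite plus_IZR; lra. Qed.

Lemma dT_diff x y x' y' : x - y = x' - y' -> dT x y = dT x' y'.
Proof. intros H. unfold dT. rewrite H. reflexivity. Qed.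

Lemma F_shift_nat (F : R -> R -> R) (HF : forall t x, F t (x + 1) = F t x + 1) s x n :
  F s (x + INR n) = F s x + INR n.
Proof.
  induction n. simpl. rewrite Rplus_0_r; ring.
  rewrite S_INR. replace (x + (INR n + 1)) with ((x + INR n) + 1) by ring.
  rewrite HF, IHn. ring.
Qed.

Lemma F_shift (F : R -> R -> R) (HF : forall t x, F t (x + 1) = F t x + 1) s x k :
  F s (x + IZR k) = F s x + IZR k.
Proof.
  destruct k as [|p|p].
  - simpl. rewrite !Rplus_0_r. reflexivity.
  - rewrite <- positive_nat_Z, <- INR_IZR_INZ. apply F_shift_nat; auto.
  - replace (IZR (Z.neg p)) with (- INR (Pos.to_nat p)).
    2:{ rewrite INR_IZR_INZ, positive_nat_Z. reflexivity. }
    pose proof (F_shift_nat F HF s (x - INR (Pos.to_nat p)) (Pos.to_nat p)).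
    replace (x - INR (Pos.to_nat p) + INR (Pos.to_nat p)) with x in H by ring.
    replace (x + - INR (Pos.to_nat p)) with (x - INR (Pos.to_nat p)) by ring. lra.
Qed.

Lemma F_eqT (F : R -> R -> R) (HF : forall t x, F t (x + 1) = F t x + 1) s x y :
  eqT x y -> eqT (F s x) (F s y).
Proof.
  intros [k Hk]. exists k. replace x with (y + IZR k) by lra. rewrite F_shift; auto. ring.
Qed.

Lemma inC_lift cL lenC x : inC cL lenC x -> exists a, eqT x a /\ cL <= a <= cL + lenC.
Proof.
  unfold inC, inClosedArc. intros H. destruct (frac_bounds (x - cL)) as [Hb He].
  exists (cL + frac_part (x - cL)). split. exists (Int_part (x - cL)). lra. lra.
Qed.

Lemma lift_inC cL lenC a : lenC < 1 -> cL <= a <= cL + lenC -> inC cL lenC a.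
Proof.
  intros Hl Ha. unfold inC, inClosedArc.
  destruct (frac_char (a - cL) (a - cL) 0) as [_ ->]; simpl; lra.
Qed.

Lemma open_lift a len y : inOpenArc a len y -> exists m : Z, a + IZR m < y < a + len + IZR m.
Proof.
  unfold inOpenArc. intros H. destruct (frac_bounds (y - a)) as [Hb He].
  exists (Int_part (y - a)). lra.
Qed.

Lemma not_open_bnd a len m : 0 <= len < 1 ->
  ~ inOpenArc a len (a + IZR m) /\ ~ inOpenArc a len (a + len + IZR m).
Proof.
  intros Hl. unfold inOpenArc. split.
  - destruct (frac_char (a + IZR m - a) 0 m) as [_ ->]; lra.
  - destruct (frac_char (a + len + IZR m - a) len m) as [_ ->]; lra.
Qed.

Lemma ivt_gen (g : R -> R) a b c : continuity g -> (g a - c) * (g b - c) <= 0 ->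
  exists s, Rmin a b <= s <= Rmax a b /\ g s = c.
Proof.
  intros Hc H. destruct (Rle_dec a b).
  - destruct (IVT_cor (fun s => g s - c) a b) as [z [Hz Hz']]; auto.
    { apply continuity_minus; auto. apply continuity_const; intros ? ?; auto. }
    exists z. rewrite Rmin_left, Rmax_right by lra. split; auto. lra.
  - destruct (IVT_cor (fun s => g s - c) b a) as [z [Hz Hz']]; auto.
    { apply continuity_minus; auto. apply continuity_const; intros ? ?; auto. }
    lra. rewrite Rmult_comm; auto.
    exists z. rewrite Rmin_right, Rmax_left by lra. split; auto. lra.
Qed.

Lemma mvt_C (F Fx : R -> R -> R) cL lenC alpha s a b :
  (forall t x, derivable_pt_lim (fun y => F t y) x (Fx t x)) ->
  (forall t x l, inC cL lenC x -> derivable_pt_lim (fun y => F t y) x l -> Rabs l <= / alpha) ->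
  lenC < 1 -> cL <= a <= cL + lenC -> cL <= b <= cL + lenC ->
  Rabs (F s b - F s a) <= / alpha * Rabs (b - a).
Proof.
  intros Hder HdC Hl Ha Hb.
  destruct (MVT_abs (fun y => F s y) (Fx s) a b) as [c [Hc Hcr]].
  { intros; apply Hder. }
  rewrite Hc. apply Rmult_le_compat_r. apply Rabs_pos.
  apply (HdC s c). apply lift_inC; auto.
  split. apply Rle_trans with (Rmin a b); [apply Rmin_glb|]; lra.
  apply Rle_trans with (Rmax a b); [|apply Rmax_lub]; lra.
  apply Hder.
Qed.

Lemma contract (F Fx : R->R->R) cL lenC eL lenE alpha Slip (I0 : R -> Prop)
  p p' q xp yp x y :
  (forall t x, F t (x + 1) = F t x + 1) ->
  (forall t x, derivable_pt_lim (fun y => F t y) x (Fx t x)) ->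
  0 <= lenC < 1 -> 0 <= lenE < 1 -> lenC + lenE < 1 -> 4 < alpha ->
  (forall t x, ~ inOpenArc eL lenE x -> ~ I0 t -> inOpenArc cL lenC (F t x)) ->
  (forall t x l, inC cL lenC x -> derivable_pt_lim (fun y => F t y) x l -> Rabs l <= / alpha) ->
  (forall x, inC cL lenC x -> ~ inOpenArc eL lenE x) ->
  (forall t t' x, dT (F t x) (F t' x) <= Slip * dT t t') ->
  Slip * dT p p' < lenE / 4 ->
  inC cL lenC xp -> inC cL lenC yp -> ~ I0 p -> ~ I0 p' ->
  eqT x (F p xp) -> eqT y (F p' yp) ->
  dT (F q x) (F q y) <= / alpha * dT x y.
Proof.
  intros HF Hder HlC HlE Hsum Halpha Hmap HdC HnE HSl Hpp HCx HCy HI HI' Hx Hy.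
  destruct (inC_lift _ _ _ HCx) as [a [Ha Har]].
  destruct (inC_lift _ _ _ HCy) as [b [Hb Hbr]].
  assert (Hopen : forall t s, ~ I0 t -> cL <= s <= cL + lenC -> inOpenArc cL lenC (F t s)).
  { intros t0 s Ht Hs. apply Hmap; auto. apply HnE, lift_inC; lra. }
  assert (Hcont : continuity (fun y => F p y)).
  { intros z. apply derivable_continuous_pt. exists (Fx p z). apply Hder. }
  set (X := F p a). set (Z := F p b). set (Y := F p' b).
  assert (HxX : eqT x X) by (eapply eqT_trans; [apply Hx| apply F_eqT; auto]).
  assert (HyY : eqT y Y) by (eapply eqT_trans; [apply Hy| apply F_eqT; auto]).
  assert (Hainv : / alpha < 1/4).
  { apply Rinv_lt_contravar in Halpha; lra. }
  assert (Hapos : 0 < / alpha) by (apply Rinv_0_lt_compat; lra).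
  destruct (open_lift _ _ _ (Hopen p a HI Har)) as [m1 Hm1]. fold X in Hm1.
  assert (HZ : cL + IZR m1 < Z < cL + lenC + IZR m1).
  { pose proof (not_open_bnd cL lenC m1 HlC) as [Hn1 Hn2].
    assert (Hin : forall s, Rmin a b <= s <= Rmax a b -> cL <= s <= cL + lenC).
    { intros s Hs. split.
      apply Rle_trans with (Rmin a b); [apply Rmin_glb|]; lra.
      apply Rle_trans with (Rmax a b); [|apply Rmax_lub]; lra. }
    split; apply Rnot_le_lt; intros Hc.
    - destruct (ivt_gen (fun y => F p y) a b (cL + IZR m1) Hcont) as [s [Hs Hse]].
      { fold X Z. nra. }
      apply Hn1. rewrite <- Hse. apply Hopen; auto.
    - destruct (ivt_gen (fun y => F p y) a b (cL + lenC + IZR m1) Hcont) as [s [Hs Hse]].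
      { fold X Z. nra. }
      apply Hn2. rewrite <- Hse. apply Hopen; auto. }
  assert (HXZ : Rabs (Z - X) <= / alpha * lenC).
  { apply Rle_trans with (/ alpha * Rabs (b - a)).
    apply (mvt_C F Fx cL lenC alpha p a b); auto; lra.
    apply Rmult_le_compat_l. lra. apply Rabs_le; lra. }
  destruct (open_lift _ _ _ (Hopen p' b HI' Hbr)) as [m2 Hm2]. fold Y in Hm2.
  destruct (dT_attained Y Z) as [k Hk].
  assert (HYZ : Rabs (Y - Z - IZR k) < lenE / 4).
  { rewrite <- Hk. eapply Rle_lt_trans; [apply HSl|]. rewrite dT_sym; auto. }
  assert (Hm : (m2 - k)%Z = m1).
  { destruct (Z.lt_total (m2 - k) m1) as [Hl|[He|Hg]]; auto.
    - assert (IZR (m2 - k) <= IZR m1 - 1) by (rewrite <- minus_IZR; apply IZR_le; lia).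
      rewrite minus_IZR in H. apply Rabs_def2 in HYZ. lra.
    - assert (IZR (m2 - k) >= IZR m1 + 1) by (rewrite <- plus_IZR; apply Rle_ge, IZR_le; lia).
      rewrite minus_IZR in H. apply Rabs_def2 in HYZ. lra. }
  assert (Hm' : IZR m2 - IZR k = IZR m1) by (rewrite <- minus_IZR, Hm; auto).
  set (X0 := X - IZR m1). set (Y0 := Y - IZR k - IZR m1).
  assert (HXY : Rabs (X - Y - IZR (- k)) <= 1/2).
  { rewrite opp_IZR.
    replace (X - Y - - IZR k) with (- ((Z - X) + (Y - Z - IZR k))) by ring.
    rewrite Rabs_Ropp. eapply Rle_trans; [apply Rabs_triang|]. nra. }
  assert (Hdxy : dT x y = Rabs (X0 - Y0)).
  { rewrite (dT_eqT x X y Y); auto. rewrite (dT_half X Y (- k)); auto.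
    unfold X0, Y0. rewrite opp_IZR. f_equal; ring. }
  assert (HqX : eqT (F q x) (F q X0)).
  { apply F_eqT; auto. eapply eqT_trans; [apply HxX|]. exists m1. unfold X0; ring. }
  assert (HqY : eqT (F q y) (F q Y0)).
  { apply F_eqT; auto. eapply eqT_trans; [apply HyY|]. exists (k + m1)%Z.
    unfold Y0; rewrite plus_IZR; ring. }
  rewrite (dT_eqT _ _ _ _ HqX HqY), Hdxy.
  eapply Rle_trans; [apply dT_abs|].
  rewrite Rabs_minus_sym, (Rabs_minus_sym X0 Y0).
  apply (mvt_C F Fx cL lenC alpha q X0 Y0); auto; try lra; unfold X0, Y0; lra.
Qed.

Lemma step_ineq (F Fx : R->R->R) cL lenC eL lenE alpha Slip (I0 : R -> Prop)
  p p' q q' xp yp x y xn yn d :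
  (forall t x, F t (x + 1) = F t x + 1) ->
  (forall t x, derivable_pt_lim (fun y => F t y) x (Fx t x)) ->
  0 <= lenC < 1 -> 0 <= lenE < 1 -> lenC + lenE < 1 -> 4 < alpha ->
  (forall t x, ~ inOpenArc eL lenE x -> ~ I0 t -> inOpenArc cL lenC (F t x)) ->
  (forall t x l, inC cL lenC x -> derivable_pt_lim (fun y => F t y) x l -> Rabs l <= / alpha) ->
  (forall x, inC cL lenC x -> ~ inOpenArc eL lenE x) ->
  (forall t t' x, dT (F t x) (F t' x) <= Slip * dT t t') ->
  (forall t x x', dT (F t x) (F t x') <= alpha ^ 2 * dT x x') ->
  dT p p' = d -> dT q q' = d -> Slip * d < lenE / 4 ->
  eqT x (F p xp) -> eqT y (F p' yp) -> eqT xn (F q x) -> eqT yn (F q' y) ->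
  dT xn yn <= powerRZ alpha (2 - 3 * Z.of_nat (indic (inC cL lenC xp /\ inC cL lenC yp
      /\ ~ I0 p /\ ~ I0 p'))) * dT x y + Slip * d.
Proof.
  intros HF Hder HlC HlE Hsum Halpha Hmap HdC HnE HSl Hbil Hp Hq Hd Hx Hy Hxn Hyn.
  rewrite (dT_eqT _ _ _ _ Hxn Hyn).
  eapply Rle_trans; [apply (dT_triangle _ (F q y))|].
  apply Rplus_le_compat; [| rewrite <- Hq; apply HSl].
  unfold indic. destruct (excluded_middle_informative _) as [(H1 & H2 & H3 & H4)|Hn].
  - replace (2 - 3 * Z.of_nat 1)%Z with (-1)%Z by reflexivity. simpl.
    rewrite Rmult_1_r.
    apply (contract F Fx cL lenC eL lenE alpha Slip I0 p p' q xp yp); auto. rewrite Hp; lra.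
  - replace (2 - 3 * Z.of_nat 0)%Z with 2%Z by reflexivity. simpl.
    replace (alpha * (alpha * 1)) with (alpha ^ 2) by ring. apply Hbil.
Qed.

Definition Pw (w : R) (C I : R -> Prop) (phi : R -> R) alpha j eta eta' :=
  powerRZ alpha (2 * Z.of_nat j - 3 * Z.of_nat (wp w C I phi j eta eta')).

Lemma Pw_S w C I phi alpha j eta eta' : alpha <> 0 ->
  Pw w C I phi alpha (S j) eta eta' = Pw w C I phi alpha j eta eta' *
   powerRZ alpha (2 - 3 * Z.of_nat (indic (C (phi (eta + (INR j - 1) * w)) /\
     C (phi (eta' + (INR j - 1) * w)) /\ ~ I (eta + (INR j - 1) * w) /\
     ~ I (eta' + (INR j - 1) * w)))).
Proof.
  intros Ha. unfold Pw. rewrite <- powerRZ_add by auto. f_equal.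
  cbn [wp]. rewrite Nat2Z.inj_add, Nat2Z.inj_succ. lia.
Qed.

Lemma Pw_0 w C I phi alpha eta eta' : Pw w C I phi alpha 0 eta eta' = 1.
Proof. reflexivity. Qed.
Theorem mainTheorem6
    (w : R) (F G : R -> R -> R)
    (cL lenC eL lenE : R) (N : nat) (a0 l0 : nat -> R) (alpha Slip : R)
    (kappa K0 : nat) (M : nat -> nat) (eps : nat -> R) (s : R)
    (phip phim : R -> R)
    (HV : in_V w F G cL lenC eL lenE N a0 l0 alpha Slip kappa K0 M eps s phip phim)
    (t t' : R)
    (Hclose : dT t t' < lenE / (4 * Slip))
    (Hinv : forall m : Z,
        eqT (phip (t + IZR m * w + w)) (F (t + IZR m * w) (phip (t + IZR m * w))) /\
        eqT (phip (t' + IZR m * w + w)) (F (t' + IZR m * w) (phip (t' + IZR m * w))))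
    (n : nat) (Hn : (1 <= n)%nat) :
  dT (phip (t + INR n * w)) (phip (t' + INR n * w)) <=
    powerRZ alpha (2 * Z.of_nat n
                   - 3 * Z.of_nat (wp w (inC cL lenC) (I0set N a0 l0) phip n t t'))
      * dT (phip t) (phip t')
    + Slip * dT t t' *
      sum_f_R0 (fun i =>
        powerRZ alpha
          (2 * Z.of_nat (n - (i + 1))
           - 3 * Z.of_nat (wp w (inC cL lenC) (I0set N a0 l0) phip (n - (i + 1))
                              (t + INR (i + 1) * w) (t' + INR (i + 1) * w))))
        (n - 1).
Proof.
  unfold in_V in HV; cbv zeta in HV.
  destruct HV as (_ & Hsk & (HlC & HlE & Hdisj) & _ & _ & Halpha & HS & Hmap & Hbil
                  & HSl & HdC & _).
  destruct Hsk as (_ & HF & (Fx & Ft & Hder & _) & _).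
  assert (Ha0 : alpha <> 0) by lra.
  assert (Hsum : lenC + lenE < 1).
  { destruct (frac_bounds (eL - cL)) as [Hb He].
    assert (HE : inE eL lenE eL).
    { unfold inE, inClosedArc. replace (eL - eL) with (IZR 0 + 0) by (simpl; ring).
      destruct (frac_char (IZR 0 + 0) 0 0) as [_ ->]; lra. }
    assert (HC : inC cL lenC cL).
    { unfold inC, inClosedArc. replace (cL - cL) with (IZR 0 + 0) by (simpl; ring).
      destruct (frac_char (IZR 0 + 0) 0 0) as [_ ->]; lra. }
    assert (H1 : frac_part (eL - cL) > lenC).
    { apply Rnot_le_gt. intro H. apply (Hdisj eL). split; auto. }
    assert (H2 : frac_part (cL - eL) > lenE).
    { apply Rnot_le_gt. intro H. apply (Hdisj cL). split; auto. }
    destruct (frac_char (cL - eL) (1 - frac_part (eL - cL)) (- Int_part (eL - cL) - 1))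
      as [_ H3].
    { rewrite minus_IZR, opp_IZR. simpl. lra. }
    { lra. }
    lra. }
  assert (HnE : forall x, inC cL lenC x -> ~ inOpenArc eL lenE x).
  { intros x Hx Ho. apply (Hdisj x). split; auto. unfold inE, inClosedArc.
    destruct Ho; lra. }
  assert (Hbil' : forall t x x', dT (F t x) (F t x') <= alpha ^ 2 * dT x x').
  { intros; apply Hbil. }
  assert (Hd : Slip * dT t t' < lenE / 4).
  { apply Rmult_lt_compat_l with (r := Slip) in Hclose; auto.
    replace (Slip * (lenE / (4 * Slip))) with (lenE / 4) in Hclose by (field; lra). auto. }
  assert (HinvR : forall k : nat,
    eqT (phip (t + INR k * w)) (F (t + (INR k - 1) * w) (phip (t + (INR k - 1) * w))) /\
    eqT (phip (t' + INR k * w)) (F (t' + (INR k - 1) * w) (phip (t' + (INR k - 1) * w)))).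
  { intros k. destruct (Hinv (Z.of_nat k - 1)%Z) as [A B].
    rewrite minus_IZR, <- INR_IZR_INZ in A, B.
    replace (t + (INR k - 1) * w + w) with (t + INR k * w) in A by ring.
    replace (t' + (INR k - 1) * w + w) with (t' + INR k * w) in B by ring. auto. }
  assert (Dstep : forall k : nat,
    dT (phip (t + INR (S k) * w)) (phip (t' + INR (S k) * w)) <=
    powerRZ alpha (2 - 3 * Z.of_nat (indic (inC cL lenC (phip (t + (INR k - 1) * w)) /\
      inC cL lenC (phip (t' + (INR k - 1) * w)) /\ ~ I0set N a0 l0 (t + (INR k - 1) * w) /\
      ~ I0set N a0 l0 (t' + (INR k - 1) * w))))
    * dT (phip (t + INR k * w)) (phip (t' + INR k * w)) + Slip * dT t t').
  { intros k. destruct (HinvR k) as [A B]. destruct (HinvR (S k)) as [A' B'].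
    replace (INR (S k) - 1) with (INR k) in A', B' by (rewrite S_INR; ring).
    apply (step_ineq F Fx cL lenC eL lenE alpha Slip (I0set N a0 l0)
      (t + (INR k - 1) * w) (t' + (INR k - 1) * w) (t + INR k * w) (t' + INR k * w));
      auto.
    all: try (apply dT_diff; ring). }
  set (C := inC cL lenC) in *. set (I := I0set N a0 l0) in *.
  assert (HD0 : dT (phip (t + INR 0 * w)) (phip (t' + INR 0 * w)) = dT (phip t) (phip t')).
  { simpl. f_equal; f_equal; ring. }
  assert (Hpos : forall z, 0 <= powerRZ alpha z) by (intros; apply powerRZ_le; lra).
  assert (claim : forall m : nat,
    dT (phip (t + INR (S m) * w)) (phip (t' + INR (S m) * w)) <=
    Pw w C I phip alpha (S m) t t' * dT (phip t) (phip t') +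
    Slip * dT t t' * sum_f_R0 (fun i => Pw w C I phip alpha (S m - (i + 1))
        (t + INR (i + 1) * w) (t' + INR (i + 1) * w)) m).
  { induction m as [|m IH].
    - pose proof (Dstep 0%nat) as H. rewrite HD0 in H.
      rewrite Pw_S, Pw_0 by auto. cbn [sum_f_R0].
      replace (1 - (0 + 1))%nat with 0%nat by reflexivity. rewrite Pw_0. lra.
    - pose proof (Dstep (S m)) as H.
      eapply Rle_trans; [apply H|].
      set (L := powerRZ alpha _). assert (HL : 0 <= L) by apply Hpos.
      rewrite (Pw_S _ _ _ _ _ (S m) t t') by auto. fold L.
      rewrite tech5. replace (S (S m) - (S m + 1))%nat with 0%nat by lia. rewrite Pw_0.
      rewrite (sum_eq _ (fun i => Pw w C I phip alpha (S m - (i + 1))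
        (t + INR (i + 1) * w) (t' + INR (i + 1) * w) * L)).
      2:{ intros i Hi. replace (S (S m) - (i + 1))%nat with (S (S m - (i + 1))) by lia.
          rewrite Pw_S by auto. unfold L. do 3 f_equal.
          replace (t + INR (i + 1) * w + (INR (S m - (i + 1)) - 1) * w)
            with (t + (INR (S m) - 1) * w)
            by (rewrite minus_INR by lia; ring).
          replace (t' + INR (i + 1) * w + (INR (S m - (i + 1)) - 1) * w)
            with (t' + (INR (S m) - 1) * w)
            by (rewrite minus_INR by lia; ring).
          reflexivity. }
      rewrite <- scal_sum.
      assert (L * dT (phip (t + INR (S m) * w)) (phip (t' + INR (S m) * w)) <=
        L * (Pw w C I phip alpha (S m) t t' * dT (phip t) (phip t') +
        Slip * dT t t' * sum_f_R0 (fun i => Pw w C I phip alpha (S m - (i + 1))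
        (t + INR (i + 1) * w) (t' + INR (i + 1) * w)) m)).
      { apply Rmult_le_compat_l; auto. }
      nra. }
  destruct n as [|n]. lia.
  replace (S n - 1)%nat with n by lia.
  exact (claim n).
Qed.
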